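(* Let $H$ be a graph obtained from a path $w_1w_2\cdots w_7$ by adding the edges of a matching $M$ on $\{w_1,\dots,w_7\}$. Then $H$ has a stable set $S$ with $|S|=3$ and $\{w_1,w_7\}\setminus S\neq\emptyset$.
   Context: A matching is a set of pairwise disjoint edges. A stable set is a set of pairwise non-adjacent vertices. Graphs are simple. *)

(* Defs.v *)
(* Vertices w_1..w_7 are the ordinals 0..6 of 'I_7. *)
From mathcomp Require Import all_boot.
Set Implicit Arguments. Unset Strict Implicit. Unset Printing Implicit Defensive.

Definition path_edge (x y : 'I_7) : bool := (x.+1 == y) || (y.+1 == x).

Definition is_matching (M : {set {set 'I_7}}) : Prop :=
  (forall e, e \in M -> #|e| = 2) /\ trivIset M.

Definition H_adj (M : {set {set 'I_7}}) (x y : 'I_7) : bool :=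
  (x != y) && (path_edge x y || ([set x; y] \in M)).

Definition stable (M : {set {set 'I_7}}) (S : {set 'I_7}) : Prop :=
  forall x y, x \in S -> y \in S -> ~~ H_adj M x y.

Definition w1 : 'I_7 := @Ordinal 7 0 isT.
Definition w7 : 'I_7 := @Ordinal 7 6 isT.

(* Main.v *)
Require Import Defs.
From mathcomp Require Import all_boot zify.
Set Implicit Arguments. Unset Strict Implicit. Unset Printing Implicit Defensive.

Definition pl : seq (nat * nat) :=
  [:: (0,2); (0,3); (0,4); (0,5); (0,6); (1,3); (1,4); (1,5); (1,6);
      (2,4); (2,5); (2,6); (3,5); (3,6); (4,6)].

Definition confl : seq (nat * nat) :=
  [:: (0,1); (0,2); (0,3); (0,4); (0,9); (0,10); (0,11); (1,2); (1,3); (1,4); (1,5); (1,12); (1,13); (2,3); (2,4); (2,6); (2,9); (2,14); (3,4); (3,7); (3,10); (3,12); (4,8); (4,11); (4,13); (4,14); (5,6); (5,7); (5,8); (5,12); (5,13); (6,7); (6,8); (6,9); (6,14); (7,8); (7,10); (7,12); (8,11); (8,13); (8,14); (9,10); (9,11); (9,14); (10,11); (10,12); (11,13); (11,14); (12,13); (13,14)].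

Definition triples : seq (nat * nat * nat * (nat * nat * nat)) :=
  [:: (0,2,4,(0,2,9)); (0,2,5,(0,3,10)); (0,3,5,(1,3,12)); (1,3,5,(5,7,12));
      (1,3,6,(5,8,13)); (1,4,6,(6,8,14)); (2,4,6,(9,11,14))].

Fixpoint allbits (k : nat) : seq (seq bool) :=
  if k is k'.+1 then [seq b :: s | b <- [:: true; false], s <- allbits k'] else [:: [::]].

Lemma allbitsP k s : size s = k -> s \in allbits k.
Proof.
elim: k s => [|k IH] [|b s] //= [Hs].
by case: b; rewrite !mem_cat map_f ?orbT //; apply: IH.
Qed.

Definition conflict (P Q : nat * nat) : bool :=
  let: (a, c) := P in let: (a', c') := Q in
  [|| (a == a') && (c != c'), (a == c') && (c != a'),
      (c == a') && (a != c') | (c == c') && (a != a')].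

Definition cons_ok (s : seq bool) : bool :=
  all (fun ij => ~~ (nth false s ij.1 && nth false s ij.2)) confl.

Definition good (s : seq bool) (t : nat * nat * nat * (nat * nat * nat)) : bool :=
  let: (_, _, _, (i, j, k)) := t in
  [&& ~~ nth false s i, ~~ nth false s j & ~~ nth false s k].

Definition trip_ok (t : nat * nat * nat * (nat * nat * nat)) : bool :=
  let: (p, q, r, (i, j, k)) := t in
  [&& p.+1 < q, q.+1 < r, r < 7, ((p != 0) || (r != 6)),
      [&& i < 15, j < 15 & k < 15],
      nth (0,0) pl i == (p, q), nth (0,0) pl j == (p, r) & nth (0,0) pl k == (q, r)].

Lemma comb : all (fun s => cons_ok s ==> has (good s) triples) (allbits 15).
Proof. by vm_compute. Qed.
Lemma trips : all trip_ok triples.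
Proof. by vm_compute. Qed.
Lemma pl_ok : all (fun P => (P.1 < P.2) && (P.2 < 7)) pl.
Proof. by vm_compute. Qed.
Lemma confl_ok : all (fun ij => [&& ij.1 < 15, ij.2 < 15 &
   conflict (nth (0,0) pl ij.1) (nth (0,0) pl ij.2)]) confl.
Proof. by vm_compute. Qed.

Section Main.
Variable M : {set {set 'I_7}}.
Hypothesis tM : trivIset M.

Lemma noconf (x y z : 'I_7) : y != z -> z != x ->
  [set x; y] \in M -> [set x; z] \in M -> False.
Proof.
move=> yz zx Hy Hz.
have ne : [set x; y] != [set x; z].
  apply/eqP => E.
  have : z \in [set x; y] by rewrite E !inE eqxx orbT.
  by rewrite !inE (negbTE zx) eq_sym (negbTE yz).
have /disjoint_setI0 := trivIsetP tM _ _ Hy Hz ne.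
move/setP/(_ x); by rewrite !inE eqxx.
Qed.

Definition Sn (P : nat * nat) : {set 'I_7} := [set (inord P.1 : 'I_7); inord P.2].

Lemma ord_neq (a b : nat) : a < 7 -> b < 7 -> a != b -> (inord a : 'I_7) != inord b.
Proof. by move=> Ha Hb ab; rewrite -(inj_eq val_inj) /= !inordK. Qed.

Lemma conf_lemma (P Q : nat * nat) : P \in pl -> Q \in pl -> conflict P Q ->
  ~~ ((Sn P \in M) && (Sn Q \in M)).
Proof.
move=> HP HQ.
have /andP [HP1 HP2] := allP pl_ok P HP.
have /andP [HQ1 HQ2] := allP pl_ok Q HQ.
case: P HP1 HP2 {HP} => a c /= ac c7; case: Q HQ1 HQ2 {HQ} => a' c' /= ac' c'7.
have a7 : a < 7 by apply: ltn_trans c7.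
have a'7 : a' < 7 by apply: ltn_trans c'7.
rewrite /Sn /=.
case/or4P => /andP [/eqP E ne]; apply/negP => /andP [H1 H2]; subst.
- apply: (noconf _ _ H1 H2); apply: ord_neq => //.
  by rewrite neq_ltn ?ac' ?ac ?orbT.
- rewrite setUC in H2; apply: (noconf _ _ H1 H2); apply: ord_neq => //.
  by rewrite neq_ltn ?ac' ?ac ?orbT.
- rewrite setUC in H1; apply: (noconf _ _ H1 H2); apply: ord_neq => //.
  by rewrite neq_ltn ?ac' ?ac ?orbT.
- rewrite setUC in H1; rewrite setUC in H2; apply: (noconf _ _ H1 H2); apply: ord_neq => //.
  by rewrite neq_ltn ?ac' ?ac ?orbT.
Qed.

Lemma pair_ok (u v : 'I_7) : u.+1 < v -> [set u; v] \notin M ->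
  ~~ H_adj M u v && ~~ H_adj M v u.
Proof.
move=> uv nM; rewrite /H_adj /path_edge [[set v; u]]setUC (negbTE nM) !orbF.
apply/andP; split; apply/negP => /andP [_ /orP [] /eqP E]; move: uv E; lia.
Qed.

Lemma trip_lemma (p q r : nat) : p.+1 < q -> q.+1 < r -> r < 7 -> (p != 0) || (r != 6) ->
  Sn (p, q) \notin M -> Sn (p, r) \notin M -> Sn (q, r) \notin M ->
  exists S : {set 'I_7},
    [/\ stable M S, #|S| = 3 & [set w1; w7] :\: S != set0].
Proof.
move=> pq qr r7 pr Npq Npr Nqr.
have q7 : q < 7 by lia.
have p7 : p < 7 by lia.
have va : nat_of_ord (inord p : 'I_7) = p by rewrite inordK.
have vb : nat_of_ord (inord q : 'I_7) = q by rewrite inordK.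
have vc : nat_of_ord (inord r : 'I_7) = r by rewrite inordK.
rewrite /Sn /= in Npq Npr Nqr.
move: (inord p : 'I_7) (inord q : 'I_7) (inord r : 'I_7) va vb vc Npq Npr Nqr.
move=> a b c va vb vc Npq Npr Nqr.
have ab : a.+1 < b by rewrite va vb.
have bc : b.+1 < c by rewrite vb vc.
have ac : a.+1 < c by rewrite va vc; lia.
have /andP [ab1 ab2] := pair_ok ab Npq.
have /andP [bc1 bc2] := pair_ok bc Nqr.
have /andP [ac1 ac2] := pair_ok ac Npr.
have nab : a != b by rewrite -(inj_eq val_inj) /= va vb; lia.
have nbc : b != c by rewrite -(inj_eq val_inj) /= vc vb; lia.
have nac : a != c.
  by rewrite -(inj_eq val_inj) /= va vc; lia.
exists [set a; b; c]; split.
- move=> x y; rewrite !inE => /orP [/orP [] | ] /eqP -> /orP [/orP [] | ] /eqP ->;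
    by rewrite ?ab1 ?ab2 ?bc1 ?bc2 ?ac1 ?ac2 // /H_adj eqxx.
- rewrite -setUA cardsU1 cards2 nbc !inE negb_or nab nac.
  by [].
- apply/set0Pn; case/orP: pr => [p0 | r6].
  + exists w1; rewrite !inE eqxx /= !negb_or.
    rewrite -!(inj_eq val_inj) /= va vb vc /=; clear -pq qr r7 p0; lia.
  + exists w7; rewrite !inE eqxx orbT /= !negb_or.
    rewrite -!(inj_eq val_inj) /= va vb vc /=; clear -pq qr r7 r6; lia.
Qed.

End Main.

Theorem lemma18 (M : {set {set 'I_7}}) :
  is_matching M ->
  exists S : {set 'I_7},
    [/\ stable M S, #|S| = 3 & [set w1; w7] :\: S != set0].
Proof.
move=> [_ tM].
pose s := mkseq (fun i => Sn (nth (0,0) pl i) \in M) 15.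
have Hs : forall i, i < 15 -> nth false s i = (Sn (nth (0,0) pl i) \in M).
  by move=> i Hi; rewrite nth_mkseq.
have Hc : cons_ok s.
  apply/allP => [[i j]] Hij.
  have /and3P [/= Hi Hj Hcf] := allP confl_ok _ Hij.
  rewrite /= !Hs //; apply: conf_lemma => //; exact: mem_nth.
have /hasP [[[[p q] r] [[i j] k]] Tin gT] :=
  implyP (allP comb s (allbitsP (size_mkseq _ _))) Hc.
have /and4P [pq qr r7 /and5P [pr /and3P [i15 j15 k15] /eqP Ei /eqP Ej /eqP Ek]] :=
  allP trips _ Tin.
move: gT => /and3P [].
rewrite !Hs // Ei Ej Ek => N1 N2 N3.
exact: (trip_lemma tM pq qr r7 pr N1 N2 N3).
Qed.
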